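(* Assume the setting below, and let $\gamma=\sup_{W_1\in V_{1,H},W_2\in V_{2,H}}\frac{(T_1W_1,T_2W_2)}{\|T_1W_1\|\,\|T_2W_2\|}$ (with $\|\cdot\|$ the $L^2(\Omega)$ norm), assumed to lie in $(0,1)$. If $$\tau^2\le 2(1-\gamma^2)\inf_{W\in V_{2,H}}\frac{\|W\|_{m_{22}}^2}{\|W\|_{a_{22}}^2},$$ then discretization scheme 1 is stable; that is, the discrete energy $E^{n+\frac12}$ is conserved in $n$ and satisfies $E^{n+\frac12}\ge \|(U_1^{n+1},U_2^{n+1})\|_c^2+\|(U_1^n,U_2^n)\|_c^2+\|(U_1^{n+1},U_2^n)\|_a^2+\|(U_1^n,U_2^{n+1})\|_a^2\ge0$ for all $n\ge0$.
   Context: Let $\Omega\subset\mathbb{R}^d$ be bounded, $\kappa>0$ a coefficient, $a(u,v)=\int_\Omega\kappa\nabla u\cdot\nabla v$, and $(\cdot,\cdot)$ the $L^2(\Omega)$ inner product. $V_{1,H},V_{2,H}$ are finite-dimensional spaces (in the paper $V_{j,H}=\prod_{k\in I_j}V_H$ for a coarse finite element space $V_H$ and a partition $I_1\sqcup I_2$ of the continua indices), with linear maps $T_{j,0},T_{j,1}$ on $V_{j,H}$ and $T_j=T_{j,0}+T_{j,1}$ (in the paper, $T_{j,0}U=\sum_K\mathbf{1}_K\sum_{k\in I_j}\phi_k^KU_k$, $T_{j,1}U=\sum_K\mathbf{1}_K\sum_{k\in I_j}\sum_m\phi_k^{K,m}\partial_{x_m}U_k$ with fixed multiscale basis functions). Bilinear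 forms: $m_{ij}(U,W)=(T_jU,T_iW)$, $a_{ij}(U,W)=a(T_{j,1}U,T_{i,1}W)$, $c_{ij}(U,W)=a(T_{j,0}U,T_{i,0}W)$ for $U\in V_{j,H},W\in V_{i,H}$; $\|W\|_{m_{22}}^2=m_{22}(W,W)$, $\|W\|_{a_{22}}^2=a_{22}(W,W)$; $\|(W_1,W_2)\|_x^2=\sum_{i,j=1}^2x_{ij}(W_j,W_i)$ for $x\in\{m,a,c\}$. Discretization scheme 1 (with zero source, as assumed in the paper's stability analysis), time step $\tau>0$: for $n\ge1$, for all $W_1\in V_{1,H}$, $\tfrac{1}{\tau^2} m_{11}(U_1^{n+1}-2U_1^n+U_1^{n-1},W_1)+\tfrac{1}{\tau^2} m_{12}(U_2^{n+1}-2U_2^n+U_2^{n-1},W_1)+\tfrac12 a_{11}(U_1^{n+1}+U_1^{n-1},W_1)+a_{12}(U_2^n,W_1)+\tfrac12 c_{11}(U_1^{n+1}+U_1^{n-1},W_1)+\tfrac12 c_{12}(U_2^{n+1}+U_2^{n-1},W_1)=0$, and for all $W_2\in V_{2,H}$, $\tfrac{1}{\tau^2} m_{22}(U_2^{n+1}-2U_2^n+U_2^{n-1},W_2)+\tfrac{1}{\tau^2} m_{21}(U_1^{n+1}-2U_1^n+U_1^{n-1},W_2)+a_{21}(U_1^n,W_2)+a_{22}(U_2^n,W_2)+\tfrac12 c_{21}(U_1^{n+1}+U_1^{n-1},W_2)+\tfrac12 c_{22}(U_2^{n+1}+U_2^{n-1},W_2)=0$. Discrete energy: $E^{n+\frac12}=\tfrac{2}{\tau^2}\|(U_1^{n+1}-U_1^n,U_2^{n+1}-U_2^n)\|_m^2+\|(U_1^{n+1},U_2^{n+1})\|_c^2+\|(U_1^n,U_2^n)\|_c^2+\|(U_1^{n+1},U_2^n)\|_a^2+\|(U_1^n,U_2^{n+1})\|_a^2-\|U_2^{n+1}-U_2^n\|_{a_{22}}^2$.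 The infimum is over nonzero $W$. *)

(* Defs.v *)
From HB Require Import structures.
From mathcomp Require Import all_boot all_order all_algebra.
From mathcomp Require Import classical_sets reals.
Set Implicit Arguments. Unset Strict Implicit. Unset Printing Implicit Defensive.
Import Order.TTheory GRing.Theory Num.Theory.
Local Open Scope ring_scope.

Section Defs.
Variables (R : realType) (F : lmodType R).

(* A symmetric bilinear form on F (linearity in the first argument plus
   symmetry gives bilinearity). *)
Definition sym_bilinear (b : F -> F -> R) : Prop :=
  (forall u v, b u v = b v u) /\
  (forall (k : R) (u v w : F), b (k *: u + v) w = k * b u w + b v w).

Definition l2norm (ip : F -> F -> R) (u : F) : R := Num.sqrt (ip u u).

(* ||(W1,W2)||_x^2 = sum_{i,j} x_ij(W_j,W_i) where
   x_ij(U,W) = b (S_j U) (S_i W). *)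
Definition pair_sqnorm (V1 V2 : Type) (b : F -> F -> R)
  (S1 : V1 -> F) (S2 : V2 -> F) (W1 : V1) (W2 : V2) : R :=
  b (S1 W1) (S1 W1) + b (S2 W2) (S1 W1) + b (S1 W1) (S2 W2) + b (S2 W2) (S2 W2).

Definition gamma_set (V1 V2 : Type) (ip : F -> F -> R)
  (T1 : V1 -> F) (T2 : V2 -> F) : set R :=
  [set r | exists W1 W2, T1 W1 != 0 /\ T2 W2 != 0 /\
      r = ip (T1 W1) (T2 W2) / (l2norm ip (T1 W1) * l2norm ip (T2 W2))].

Variables (V1 V2 : lmodType R)
  (ip a : F -> F -> R)
  (T10 T11 : V1 -> F) (T20 T21 : V2 -> F) (tau : R)
  (U1 : nat -> V1) (U2 : nat -> V2).

Definition T1 (U : V1) : F := T10 U + T11 U.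
Definition T2 (U : V2) : F := T20 U + T21 U.

(* Discretization scheme 1 (zero source), equations for n >= 1. *)
Definition scheme1 : Prop :=
  forall n : nat, (1 <= n)%N ->
  (forall W1 : V1,
     tau^-2 * ip (T1 (U1 n.+1 - U1 n *+ 2 + U1 n.-1)) (T1 W1)
   + tau^-2 * ip (T2 (U2 n.+1 - U2 n *+ 2 + U2 n.-1)) (T1 W1)
   + 2^-1 * a (T11 (U1 n.+1 + U1 n.-1)) (T11 W1)
   + a (T21 (U2 n)) (T11 W1)
   + 2^-1 * a (T10 (U1 n.+1 + U1 n.-1)) (T10 W1)
   + 2^-1 * a (T20 (U2 n.+1 + U2 n.-1)) (T10 W1) = 0) /\
  (forall W2 : V2,
     tau^-2 * ip (T2 (U2 n.+1 - U2 n *+ 2 + U2 n.-1)) (T2 W2)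
   + tau^-2 * ip (T1 (U1 n.+1 - U1 n *+ 2 + U1 n.-1)) (T2 W2)
   + a (T11 (U1 n)) (T21 W2)
   + a (T21 (U2 n)) (T21 W2)
   + 2^-1 * a (T10 (U1 n.+1 + U1 n.-1)) (T20 W2)
   + 2^-1 * a (T20 (U2 n.+1 + U2 n.-1)) (T20 W2) = 0).

(* The part of E^{n+1/2} made of c- and a-norms. *)
Definition energy_lower (n : nat) : R :=
    pair_sqnorm a T10 T20 (U1 n.+1) (U2 n.+1)
  + pair_sqnorm a T10 T20 (U1 n) (U2 n)
  + pair_sqnorm a T11 T21 (U1 n.+1) (U2 n)
  + pair_sqnorm a T11 T21 (U1 n) (U2 n.+1).

Definition energy (n : nat) : R :=
    2 / tau ^+ 2 * pair_sqnorm ip T1 T2 (U1 n.+1 - U1 n) (U2 n.+1 - U2 n)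
  + energy_lower n
  - a (T21 (U2 n.+1 - U2 n)) (T21 (U2 n.+1 - U2 n)).

End Defs.

(* Main.v *)
Require Import Defs.
From HB Require Import structures.
From mathcomp Require Import all_boot all_order all_algebra.
From mathcomp Require Import classical_sets reals.
Import Order.TTheory GRing.Theory Num.Theory.
Local Open Scope ring_scope.
From mathcomp Require Import boolp ring lra.
Set Implicit Arguments.
Section Aux.
Variables (R : realType) (F : lmodType R) (b : F -> F -> R).
Hypothesis Hb : sym_bilinear b.

Lemma bDl u v w : b (u + v) w = b u w + b v w.
Proof. by have := (Hb.2 1 u v w); rewrite scale1r mul1r. Qed.
Lemma b0l w : b 0 w = 0.
Proof. have h := bDl 0 0 w; rewrite addr0 in h; lra. Qed.
Lemma bNl u w : b (- u) w = - b u w.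
Proof. by have := (Hb.2 (-1) u 0 w); rewrite addr0 b0l addr0 scaleN1r mulN1r. Qed.
Lemma bDr u v w : b w (u + v) = b w u + b w v.
Proof. by rewrite Hb.1 bDl !(Hb.1 _ w). Qed.
Lemma bNr u w : b w (- u) = - b w u.
Proof. by rewrite Hb.1 bNl Hb.1. Qed.
Lemma bsym u v : b u v = b v u.
Proof. exact: Hb.1. Qed.
Lemma b0r w : b w 0 = 0.
Proof. by rewrite bsym b0l. Qed.
End Aux.

Section Lin.
Variables (R : realType) (F V : lmodType R) (A B : {linear V -> F}).
Lemma TD x y : (fun U => A U + B U) (x + y) = (fun U => A U + B U) x + (fun U => A U + B U) y.
Proof. by rewrite /= !linearD addrACA. Qed.
End Lin.
Lemma comb {R : realType} {s M1 M0 L1 L0 K1 K0 A B C D E G A' B' C' D' E' G' : R} :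
 s^-1 * A + s^-1 * B + C + D + E + G = 0 ->
 s^-1 * A' + s^-1 * B' + C' + D' + E' + G' = 0 ->
 M1 - M0 = A + B + A' + B' ->
 L1 - K1 - (L0 - K0) = 2 * (C + D + E + G + C' + D' + E' + G') ->
 2 / s * M1 + L1 - K1 = 2 / s * M0 + L0 - K0.
Proof.
move=> h3 h4 h1 h2.
have h5 : s^-1 * (M1 - M0) = s^-1 * (A + B + A' + B') by rewrite h1.
rewrite /= mulrDr mulrN !mulrDr in h5.
rewrite -!mulrA. lra.
Qed.

Ltac symnorm b Hb :=
  repeat match goal with
  | |- context [b ?x ?y] => match goal with |- context [b y x] =>
        tryif constr_eq x y then fail else rewrite (bsym Hb x y) end
  end.

Section S.
Variables (R : realType) (F V1 V2 : lmodType R)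
  (ip a : F -> F -> R)
  (T10 T11 : {linear V1 -> F}) (T20 T21 : {linear V2 -> F})
  (tau : R) (U1 : nat -> V1) (U2 : nat -> V2).
Hypotheses (Hip : sym_bilinear ip) (Ha : sym_bilinear a).

Lemma step n : scheme1 ip a T10 T11 T20 T21 tau U1 U2 ->
  energy ip a T10 T11 T20 T21 tau U1 U2 n.+1 = energy ip a T10 T11 T20 T21 tau U1 U2 n.
Proof.
move=> Hs.
have L10D : forall x y, T10 (x + y) = T10 x + T10 y by move=> x y; rewrite linearD.
have L11D : forall x y, T11 (x + y) = T11 x + T11 y by move=> x y; rewrite linearD.
have L20D : forall x y, T20 (x + y) = T20 x + T20 y by move=> x y; rewrite linearD.
have L21D : forall x y, T21 (x + y) = T21 x + T21 y by move=> x y; rewrite linearD.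
have L10N : forall x, T10 (- x) = - T10 x by move=> x; rewrite linearN.
have L11N : forall x, T11 (- x) = - T11 x by move=> x; rewrite linearN.
have L20N : forall x, T20 (- x) = - T20 x by move=> x; rewrite linearN.
have L21N : forall x, T21 (- x) = - T21 x by move=> x; rewrite linearN.
have [E1 E2] := Hs n.+1 isT.
have {E1} := E1 (U1 n.+2 - U1 n).
have {E2} := E2 (U2 n.+2 - U2 n).
rewrite /= => E2 E1.
rewrite /energy.
apply: (comb E1 E2).
- rewrite /pair_sqnorm /T1 /T2 !mulr2n !opprD !(L10D, L11D, L20D, L21D) !(L10N, L11N, L20N, L21N).
  rewrite !(bDl Hip) !(bDr Hip) !(bNl Hip) !(bNr Hip).
  symnorm ip Hip. lra.
- rewrite /energy_lower /pair_sqnorm !opprD !(L10D, L11D, L20D, L21D) !(L10N, L11N, L20N, L21N).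
  rewrite !(bDl Ha) !(bDr Ha) !(bNl Ha) !(bNr Ha).
  symnorm a Ha. lra.
Qed.

Lemma psq (S1 : V1 -> F) (S2 : V2 -> F) (b : F -> F -> R) (Hb : sym_bilinear b) W1 W2 :
  pair_sqnorm b S1 S2 W1 W2 = b (S1 W1 + S2 W2) (S1 W1 + S2 W2).
Proof. rewrite /pair_sqnorm (bDl Hb) !(bDr Hb); lra. Qed.

Lemma ip_ge0 : (forall u : F, u != 0 -> 0 < ip u u) -> forall u, 0 <= ip u u.
Proof.
move=> Hp u; case: (eqVneq u 0) => [->|h]; first by rewrite (b0l Hip).
exact/ltW/Hp.
Qed.

Lemma T1N W : T1 T10 T11 (- W) = - T1 T10 T11 W.
Proof. by rewrite /T1 !linearN opprD. Qed.

Lemma scs gamma W1 W2 : (forall u : F, u != 0 -> 0 < ip u u) ->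
  gamma = sup (gamma_set ip (T1 T10 T11) (T2 T20 T21)) -> 0 < gamma < 1 ->
  (1 - gamma ^+ 2) * ip (T2 T20 T21 W2) (T2 T20 T21 W2)
    <= pair_sqnorm ip (T1 T10 T11) (T2 T20 T21) W1 W2.
Proof.
move=> Hp Hg /andP [g0 g1].
have hs : has_sup (gamma_set ip (T1 T10 T11) (T2 T20 T21)).
  case: (pselect (has_sup (gamma_set ip (T1 T10 T11) (T2 T20 T21)))) => // hn.
  by move: g0; rewrite Hg sup_out // ltxx.
have ub := sup_upper_bound hs.
rewrite psq //.
have Hge := ip_ge0 Hp.
set u := T1 T10 T11 W1; set v := T2 T20 T21 W2.
rewrite (bDl Hip u v) (bDr Hip u v u) (bDr Hip u v v).
have gg : 0 <= gamma ^+ 2 by apply: sqr_ge0.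
case: (eqVneq u 0) => [->|hu].
  rewrite ?(b0l Hip) ?(b0r Hip). have := Hge v. nra.
case: (eqVneq v 0) => [->|hv].
  rewrite ?(b0l Hip) ?(b0r Hip). have := Hge u. nra.
have := ub (ip (T1 T10 T11 (- W1)) v / (l2norm ip (T1 T10 T11 (- W1)) * l2norm ip v)).
rewrite -Hg => h.
have {h} : ip (- u) v / (l2norm ip (- u) * l2norm ip v) <= gamma.
  rewrite -T1N; apply: h; exists (- W1), W2; split; last split => //.
  by rewrite T1N oppr_eq0.
rewrite /l2norm !(bNl Hip) !(bNr Hip) opprK.
have hu2 := Hp _ hu; have hv2 := Hp _ hv.
have nu0 : 0 < Num.sqrt (ip u u) by rewrite sqrtr_gt0.
have nv0 : 0 < Num.sqrt (ip v v) by rewrite sqrtr_gt0.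
rewrite ler_pdivrMr; last exact: mulr_gt0.
have eu := sqr_sqrtr (ltW hu2); have ev := sqr_sqrtr (ltW hv2).
rewrite (bsym Hip v u).
move: (Num.sqrt (ip u u)) (Num.sqrt (ip v v)) eu ev nu0 nv0 => nu nv <- <- nu0 nv0 h.
have := sqr_ge0 (nu - gamma * nv). nra.
Qed.

End S.

Theorem theorem2 (R : realType) (F V1 V2 : lmodType R)
  (ip a : F -> F -> R)
  (T10 T11 : {linear V1 -> F}) (T20 T21 : {linear V2 -> F})
  (tau gamma : R) (U1 : nat -> V1) (U2 : nat -> V2) :
  sym_bilinear ip -> (forall u : F, u != 0 -> 0 < ip u u) ->
  sym_bilinear a -> (forall u : F, 0 <= a u u) ->
  0 < tau ->
  gamma = sup (gamma_set ip (T1 T10 T11) (T2 T20 T21)) ->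
  0 < gamma < 1 ->
  (forall W : V2, W != 0 -> a (T21 W) (T21 W) != 0 ->
     tau ^+ 2 <= 2 * (1 - gamma ^+ 2) *
       (ip (T2 T20 T21 W) (T2 T20 T21 W) / a (T21 W) (T21 W))) ->
  scheme1 ip a T10 T11 T20 T21 tau U1 U2 ->
  forall n : nat,
    energy ip a T10 T11 T20 T21 tau U1 U2 n
      = energy ip a T10 T11 T20 T21 tau U1 U2 0 /\
    energy_lower a T10 T11 T20 T21 U1 U2 n
      <= energy ip a T10 T11 T20 T21 tau U1 U2 n /\
    0 <= energy_lower a T10 T11 T20 T21 U1 U2 n.
Proof.
move=> Hip Hp Ha Hag tau0 Hg Hg01 Hcfl Hs n.
have Hge := ip_ge0 Hip Hp.
have /andP [g0 g1] := Hg01.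
have Hnl : 0 <= energy_lower a T10 T11 T20 T21 U1 U2 n.
  rewrite /energy_lower !(psq _ _ _ _ Ha).
  by apply: addr_ge0; [apply: addr_ge0; [apply: addr_ge0|]|].
split; [|split] => //.
  elim: n {Hnl} => [//|n IH]; by rewrite (step T10 T11 T20 T21 Hip Ha n Hs).
have Ht : forall W, tau ^+ 2 * a (T21 W) (T21 W)
    <= 2 * (1 - gamma ^+ 2) * ip (T2 T20 T21 W) (T2 T20 T21 W).
  move=> W; case: (eqVneq (a (T21 W) (T21 W)) 0) => [->|ha].
    rewrite mulr0; apply: mulr_ge0; last exact: Hge.
    have : gamma ^+ 2 < 1 by rewrite expr2; nra.
    lra.
  have hW : W != 0.
    by apply/eqP => W0; move: ha; rewrite W0 linear0 (b0l Ha) eqxx.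
  have apos : 0 < a (T21 W) (T21 W) by rewrite lt_def ha Hag.
  have := Hcfl W hW ha.
  by rewrite mulrA ler_pdivlMr.
have h1 := Ht (U2 n.+1 - U2 n).
have h2 := scs T10 T11 T20 T21 Hip (U1 n.+1 - U1 n) (U2 n.+1 - U2 n) Hp Hg Hg01.
rewrite /energy.
set K := a _ _ in h1 *.
set M := pair_sqnorm _ _ _ _ _ in h2 *.
suff : K <= 2 / tau ^+ 2 * M by lra.
have s0 : 0 < tau ^+ 2 by apply: exprn_gt0.
rewrite mulrAC ler_pdivlMr //. lra.
Qed.
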